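(* Let $f:\mathbb{R}^d\to\mathbb{R}$ be $L$-smooth, let $h$ be proper, closed and convex, and let $g:\mathbb{R}^d\to\mathbb{R}$ be $l$-Lipschitz continuous. Let $\lambda>0$ and suppose that for every $w$ the minimum of $x\mapsto\frac{1}{2\lambda}\|w-x\|_2^2+g(x)$ is attained at a chosen point $\zeta^\lambda(w)$. For $\gamma>0$ and $w,s\in\mathbb{R}^d$ let $\mathcal{P}_\gamma(w,s)=\frac1\gamma\left(w-\operatorname{prox}_{\gamma h}(w-\gamma s)\right)$, and let $\mathcal{G}_{\gamma}(w)=\{\mathcal{P}_\gamma(w,\nabla f(w)+v): v\in\partial g(w)\}$, where $\partial g$ is the (limiting) subdifferential of $g$. Let $w^k\in\mathbb{R}^d$, $\gamma>0$, and $\mathcal{G}^k_{\gamma,E}(w^k)=\mathcal{P}_\gamma\left(w^k,\nabla f(w^k)+\frac1\lambda(w^k-\zeta^\lambda(w^k))\right)$. If $\bar\gamma\ge\gamma$, then $$\operatorname{dist}\left(0,\mathcal{G}_{\bar\gamma}(\zeta^\lambda(w^k))\right)\le\|\mathcal{G}^k_{\gamma,E}(w^k)\|_2+2l\lambda\left(\frac{2}{\bar\gamma}+L\right).$$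
   Context: $\operatorname{prox}_{\gamma h}(v)=\arg\min_x\left(\frac{1}{2\gamma}\|v-x\|_2^2+h(x)\right)$; $\operatorname{dist}(0,S)=\inf_{u\in S}\|u\|_2$. A function is $L$-smooth if it is differentiable with $L$-Lipschitz gradient. *)

(* Defs.v *)
From HB Require Import structures.
From mathcomp Require Import all_boot all_order all_algebra.
From mathcomp Require Import all_classical all_reals all_analysis.
Set Implicit Arguments. Unset Strict Implicit. Unset Printing Implicit Defensive.
Import Order.TTheory GRing.Theory Num.Theory.
Import numFieldNormedType.Exports.
Local Open Scope classical_set_scope.
Local Open Scope ring_scope.

Section Defs.
Context {R : realType} {d : nat}.
Notation V := 'rV[R]_d.

Definition dotp (u v : V) : R := \sum_(i < d) u 0 i * v 0 i.
Definition enorm (u : V) : R := Num.sqrt (dotp u u).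

Definition grad (f : V -> R) (x : V) : V :=
  \row_(i < d) ('d f x (delta_mx 0 i : V)).

Definition L_smooth (L : R) (f : V -> R) : Prop :=
  (forall x, differentiable f x) /\
  (forall x y, enorm (grad f x - grad f y) <= L * enorm (x - y)).

Definition lipschitz_fun (l : R) (g : V -> R) : Prop :=
  forall x y, `|g x - g y| <= l * enorm (x - y).

Definition proper_fun (h : V -> \bar R) : Prop :=
  (forall x, h x != -oo%E) /\ (exists x, h x \is a fin_num).
Definition closed_fun (h : V -> \bar R) : Prop :=
  closed [set p : V * R | (h p.1 <= p.2%:E)%E].
Definition convex_fun (h : V -> \bar R) : Prop :=
  forall (x y : V) (t : R), 0 <= t <= 1 ->
    (h (t *: x + (1 - t) *: y)%R <= t%:E * h x + (1 - t)%:E * h y)%E.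

Definition is_prox (gamma : R) (h : V -> \bar R) (v p : V) : Prop :=
  forall x : V,
    ((1 / (2 * gamma) * enorm (v - p) ^+ 2)%:E + h p <=
     (1 / (2 * gamma) * enorm (v - x) ^+ 2)%:E + h x)%E.

(* prox_{gamma h}(v) = argmin_x (1/(2 gamma) ||v-x||^2 + h x)
   (unique for proper closed convex h and gamma > 0) *)
Definition prox (gamma : R) (h : V -> \bar R) (v : V) : V :=
  xget 0 (is_prox gamma h v).

Definition Pmap (h : V -> \bar R) (gamma : R) (w s : V) : V :=
  gamma^-1 *: (w - prox gamma h (w - gamma *: s)).

(* Frechet (regular) subdifferential:
   liminf_{y -> x, y <> x} (g y - g x - <v, y - x>) / ||y - x|| >= 0 *)
Definition frechet_subdiff (g : V -> R) (x : V) : set V :=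
  [set v | forall eps : R, 0 < eps ->
     \forall y \near x, g y - g x - dotp v (y - x) >= - eps * enorm (y - x)].

Definition limiting_subdiff (g : V -> R) (x : V) : set V :=
  [set v | exists (xs vs : nat -> V),
     [/\ xs @ \oo --> x, (fun k => g (xs k)) @ \oo --> g x,
         vs @ \oo --> v & forall k, frechet_subdiff g (xs k) (vs k)]].

Definition Gset (f : V -> R) (h : V -> \bar R) (g : V -> R) (gamma : R)
  (w : V) : set V :=
  [set Pmap h gamma w (grad f w + v) | v in limiting_subdiff g w].

(* dist(0, S) = inf_{u in S} ||u||_2  (= +oo for empty S) *)
Definition dist0 (S : set V) : \bar R :=
  ereal_inf [set (enorm u)%:E | u in S].

End Defs.

(* Main.v *)
Require Import Defs.
From HB Require Import structures.
From mathcomp Require Import all_boot all_order all_algebra.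
From mathcomp Require Import all_classical all_reals all_analysis.
From mathcomp Require Import ring lra.
Import Order.TTheory GRing.Theory Num.Theory.
Import numFieldNormedType.Exports.
Local Open Scope classical_set_scope.
Local Open Scope ring_scope.


Section Eucl.
Context {R : realType} {d : nat}.
Notation V := 'rV[R]_d.
Implicit Types u v w : V.

Lemma dotpC u v : dotp u v = dotp v u.
Proof. by apply: eq_bigr => i _; rewrite mulrC. Qed.
Lemma dotpDl u v w : dotp (u + v) w = dotp u w + dotp v w.
Proof. by rewrite /dotp -big_split; apply: eq_bigr => i _; rewrite !mxE mulrDl. Qed.
Lemma dotpDr u v w : dotp w (u + v) = dotp w u + dotp w v.
Proof. by rewrite dotpC dotpDl !(dotpC w). Qed.
Lemma dotpZl (c : R) u v : dotp (c *: u) v = c * dotp u v.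
Proof. by rewrite /dotp mulr_sumr; apply: eq_bigr => i _; rewrite !mxE mulrA. Qed.
Lemma dotpZr (c : R) u v : dotp u (c *: v) = c * dotp u v.
Proof. by rewrite dotpC dotpZl dotpC. Qed.
Lemma dotpNl u v : dotp (- u) v = - dotp u v.
Proof. by rewrite -scaleN1r dotpZl mulN1r. Qed.
Lemma dotpNr u v : dotp u (- v) = - dotp u v.
Proof. by rewrite dotpC dotpNl dotpC. Qed.
Lemma dotpBl u v w : dotp (u - v) w = dotp u w - dotp v w.
Proof. by rewrite dotpDl dotpNl. Qed.
Lemma dotpBr u v w : dotp w (u - v) = dotp w u - dotp w v.
Proof. by rewrite dotpDr dotpNr. Qed.
Lemma dotp0l u : dotp 0 u = 0.
Proof. by rewrite /dotp big1 // => i _; rewrite mxE mul0r. Qed.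

Lemma dotp_ge0 u : 0 <= dotp u u.
Proof. by apply: sumr_ge0 => i _; rewrite -expr2 sqr_ge0. Qed.

Lemma enorm_ge0 u : 0 <= enorm u.
Proof. exact: sqrtr_ge0. Qed.

Lemma enorm_sq u : enorm u ^+ 2 = dotp u u.
Proof. by rewrite /enorm sqr_sqrtr // dotp_ge0. Qed.

Lemma dotp_eq0 u : dotp u u = 0 -> u = 0.
Proof.
move=> /eqP; rewrite psumr_eq0; last by move=> i _; rewrite -expr2 sqr_ge0.
move=> /allP H; apply/rowP => i; rewrite mxE.
have := H i (mem_index_enum _); rewrite /= mulf_eq0 orbb => /eqP ->//.
Qed.

Lemma enorm0 : enorm (0 : V) = 0.
Proof. by rewrite /enorm dotp0l sqrtr0. Qed.

Lemma CS u v : dotp u v <= enorm u * enorm v.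
Proof.
have a0 := enorm_ge0 u; have b0 := enorm_ge0 v.
have [a00|an0] := eqVneq (enorm u) 0.
  have : dotp u u = 0 by rewrite -enorm_sq; move: a00; rewrite /enorm => ->; rewrite expr0n.
  by move/dotp_eq0 => ->; rewrite dotp0l enorm0 mul0r.
have [b00|bn0] := eqVneq (enorm v) 0.
  have : dotp v v = 0 by rewrite -enorm_sq; move: b00; rewrite /enorm => ->; rewrite expr0n.
  by move/dotp_eq0 => ->; rewrite dotpC dotp0l enorm0 mulr0.
have H := dotp_ge0 (enorm v *: u - enorm u *: v).
rewrite !(dotpBl, dotpBr, dotpZl, dotpZr) -!enorm_sq (dotpC v u) in H.
have ap : 0 < enorm u by rewrite lt_def an0.
have bp : 0 < enorm v by rewrite lt_def bn0.
have abp : 0 < enorm u * enorm v by rewrite mulr_gt0.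
rewrite -(ler_pM2l abp); nra.
Qed.

Lemma enorm_sqD u v : enorm (u + v) ^+ 2 = enorm u ^+ 2 + 2 * dotp u v + enorm v ^+ 2.
Proof. rewrite !enorm_sq dotpDl !dotpDr (dotpC v u); ring. Qed.
Lemma enorm_sqB u v : enorm (u - v) ^+ 2 = enorm u ^+ 2 - 2 * dotp u v + enorm v ^+ 2.
Proof. rewrite !enorm_sq dotpBl !dotpBr (dotpC v u); ring. Qed.

Lemma enormD u v : enorm (u + v) <= enorm u + enorm v.
Proof.
rewrite -(ler_pXn2r (_ : 0 < 2)%N) ?nnegrE ?addr_ge0 ?enorm_ge0 //.
rewrite enorm_sqD; have := CS u v; nra.
Qed.

Lemma enormZ (c : R) u : enorm (c *: u) = `|c| * enorm u.
Proof.
rewrite /enorm dotpZl dotpZr mulrA -expr2 sqrtrM ?sqr_ge0 //.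
by rewrite sqrtr_sqr.
Qed.
Lemma enormN u : enorm (- u) = enorm u.
Proof. by rewrite -scaleN1r enormZ normrN normr1 mul1r. Qed.
Lemma enormB u v : enorm (u - v) <= enorm u + enorm v.
Proof. by rewrite (le_trans (enormD _ _)) // enormN. Qed.
Lemma enorm_sym u v : enorm (u - v) = enorm (v - u).
Proof. by rewrite -enormN opprB. Qed.

Lemma coord_le u i : `|u 0 i| <= enorm u.
Proof.
rewrite -(ler_pXn2r (_ : 0 < 2)%N) ?nnegrE ?enorm_ge0 // enorm_sq real_normK ?num_real //.
rewrite /dotp (bigD1 i) //= -expr2 lerDl; apply: sumr_ge0 => j _; rewrite -expr2 sqr_ge0 //.
Qed.

Lemma mxnorm_le u : `|u| <= enorm u.
Proof.
rewrite [leLHS]/Num.norm /= mx_normrE; apply: bigmax_le; first exact: enorm_ge0.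
by move=> [i j] _ /=; rewrite (ord1 i); exact: coord_le.
Qed.

Lemma coord_le_mx u i : `|u 0 i| <= `|u|.
Proof.
rewrite [leRHS]/Num.norm /= mx_normrE.
by apply/bigmax_geP; right; exists (0, i).
Qed.

Lemma enorm_le_mx u : enorm u <= Num.sqrt (d%:R) * `|u|.
Proof.
rewrite /enorm -[`|u|]ger0_norm // -sqrtr_sqr -sqrtrM ?ler0n // ler_sqrt; last first.
  by rewrite mulr_ge0 ?ler0n ?sqr_ge0.
have -> : d%:R * `|u| ^+ 2 = \sum_(i < d) `|u| ^+ 2 :> R.
  by rewrite sumr_const card_ord mulr_natl.
apply: ler_sum => i _.
rewrite -expr2 -real_normK ?num_real // lerXn2r ?nnegrE //.
exact: coord_le_mx.
Qed.

Lemma enorm_rev u v : `|enorm u - enorm v| <= enorm (u - v).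
Proof.
rewrite ler_norml; apply/andP; split.
  have := enormD (v - u) u; rewrite subrK enorm_sym; lra.
have := enormD (u - v) v; rewrite subrK; lra.
Qed.

Lemma enorm_cvg (xs : nat -> V) (x v : V) : xs n @[n --> \oo] --> x ->
  enorm (v - xs n) @[n --> \oo] --> enorm (v - x).
Proof.
move=> H; apply/cvgrPdist_lt => e e0.
set s := Num.sqrt (d%:R : R).
have s0 : 0 <= s by exact: sqrtr_ge0.
have e1 : 0 < e / (s + 1) by rewrite divr_gt0 // ltr_wpDl.
move/cvgrPdist_lt: H => /(_ _ e1); apply: filterS => n Hn.
apply: le_lt_trans (enorm_rev _ _) _.
have -> : v - x - (v - xs n) = xs n - x by apply/rowP => i; rewrite !mxE; ring.
apply: le_lt_trans (enorm_le_mx _) _.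
rewrite distrC in Hn.
apply: (@le_lt_trans _ _ ((s + 1) * `|xs n - x|)).
  by rewrite ler_wpM2r // lerDl.
by rewrite mulrC -ltr_pdivlMr ?ltr_wpDl.
Qed.

Lemma parallelogram v a b :
  enorm (v - ((1/2) *: a + (1 - 1/2) *: b)) ^+ 2 =
  2^-1 * enorm (v - a) ^+ 2 + 2^-1 * enorm (v - b) ^+ 2 - 4^-1 * enorm (a - b) ^+ 2.
Proof.
rewrite !enorm_sq /dotp !mulr_sumr -big_split -sumrB /=; apply: eq_bigr => i _.
by rewrite !mxE; field.
Qed.
Lemma enorm_tri u v : enorm v <= enorm u + enorm (v - u).
Proof. by have := enormD u (v - u); rewrite addrC subrK. Qed.
Lemma subDD_r (a b c : V) : (a + c) - (b + c) = a - b.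
Proof. by rewrite opprD addrACA subrr addr0. Qed.
End Eucl.



Section Prox.
Context {R : realType} {d : nat}.
Notation V := 'rV[R]_d.

Lemma fin_cases (h : V -> \bar R) x : proper_fun h ->
  h x = +oo%E \/ h x = (fine (h x))%:E.
Proof.
move=> [hN _]; have := hN x; case: (h x) => [r| |] //=; by [right|left].
Qed.

Lemma lower_aff (h : V -> \bar R) : proper_fun h -> closed_fun h -> convex_fun h ->
  exists x0 c k, [/\ 0 <= k, h x0 = (fine (h x0))%:E &
     forall x, ((c - k * `|x - x0|)%:E <= h x)%E].
Proof.
move=> hp hc hcv; have [hN [x0 hx0]] := hp.
set h0 := fine (h x0).
have Eh0 : h x0 = h0%:E by rewrite /h0 fineK.
have notE : ~ [set p : V * R | (h p.1 <= p.2%:E)%E] (x0, h0 - 1).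
  by rewrite /= Eh0 lee_fin; lra.
rewrite /closed_fun -openC openE in hc.
have /nbhs_ballP [e /= e0 He] := hc _ notE.
exists x0, (h0 - 1), (2 / e); split => //; first by rewrite divr_ge0 // ltW.
have near0 : forall y : V, `|x0 - y| < e -> ((h0 - 1)%:E < h y)%E.
  move=> y Hy; have : ball (x0, h0 - 1) e (y, h0 - 1).
    split; first by rewrite -ball_normE.
    exact: ballxx.
  by move/He => /= /negP; rewrite -ltNge.
move=> x; set N := `|x - x0|.
have N0 : 0 <= N by exact: normr_ge0.
have [Nlt|Nge] := ltP N e.
  apply: le_trans (ltW (near0 _ _)); last by rewrite distrC.
  by rewrite lee_fin lerBlDr lerDl mulr_ge0 // divr_ge0 // ltW.
have Np : 0 < N by apply: lt_le_trans Nge.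
set t := e / (2 * N).
have t0 : 0 < t by rewrite divr_gt0 // mulr_gt0.
have t1 : t <= 1.
  by rewrite /t ler_pdivrMr ?mulr_gt0 //; lra.
have hy := hcv x x0 t; rewrite ltW //= in hy; have {}hy := hy t1.
have := near0 (t *: x + (1 - t) *: x0).
have -> : x0 - (t *: x + (1 - t) *: x0) = - (t *: (x - x0)).
  by apply/rowP => i; rewrite !mxE; ring.
rewrite normrN normrZ gtr0_norm // -/N.
have -> : t * N = e / 2 by rewrite /t; field; rewrite gt_eqF.
have e2 : e / 2 < e by rewrite ltr_pdivrMr //; lra.
move=> /(_ e2) Hlt.
have := lt_le_trans Hlt hy; rewrite Eh0.
case: (fin_cases h x hp) => ->; first by rewrite leey.
rewrite -!EFinM -EFinD !lte_fin => H.
rewrite lee_fin.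
have : (h0 - 1) - (1 - t) * h0 < t * fine (h x) by lra.
have -> : (h0 - 1) - (1 - t) * h0 = t * (h0 - t^-1) by field; rewrite gt_eqF.
rewrite ltr_pM2l // => H2.
have ti : t^-1 = 2 / e * N by rewrite /t invf_div; field; rewrite gt_eqF.
rewrite ti in H2.
apply: le_trans (ltW H2); lra.
Qed.

Lemma prox_exists (h : V -> \bar R) (gamma : R) (v : V) : 0 < gamma ->
  proper_fun h -> closed_fun h -> convex_fun h -> exists p, is_prox gamma h v p.
Proof.
move=> g0 hp hc hcv.
have [x0 [c [k [k0 Ex0 Hlow]]]] := lower_aff h hp hc hcv.
pose q := fun x : V => 1 / (2 * gamma) * enorm (v - x) ^+ 2.
pose S := [set y : R | exists x, h x = (fine (h x))%:E /\ y = q x + fine (h x)].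
pose M0 := c - k * `|v - x0| - k ^+ 2 * gamma / 2.
have lowS : forall x, h x = (fine (h x))%:E -> M0 <= q x + fine (h x).
  move=> x Ex; have := Hlow x; rewrite Ex lee_fin => H1.
  have H2 := ler_distD v x x0.
  have H3 : `|v - x| <= enorm (v - x) by exact: mxnorm_le.
  have H4 : `|x - v| = `|v - x| by exact: distrC.
  have H5 : 1 / (2 * gamma) * `|v - x| ^+ 2 <= q x.
    apply: ler_wpM2l; first by rewrite divr_ge0 ?mulr_ge0 ?ltW.
    by rewrite (ler_pXn2r (_ : 0 < 2)%N) ?nnegrE ?enorm_ge0.
  set T := `|v - x| in H3 H4 H5.
  have T0 : 0 <= T by exact: normr_ge0.
  have H6 : 0 <= (T - k * gamma) ^+ 2 / (2 * gamma) by rewrite divr_ge0 ?sqr_ge0 ?mulr_ge0 ?ltW.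
  have H7 : (T - k * gamma) ^+ 2 / (2 * gamma) = 1 / (2 * gamma) * T ^+ 2 - k * T + k ^+ 2 * gamma / 2.
    by field; rewrite gt_eqF.
  rewrite /M0; rewrite H4 in H2.
  have : k * `|x - x0| <= k * (T + `|v - x0|) by rewrite ler_wpM2l.
  nra.
have hasS : has_inf S.
  split; first by exists (q x0 + fine (h x0)), x0.
  by exists M0 => y [x [Ex ->]]; exact: lowS.
pose m := inf S.
have mle : forall x, h x = (fine (h x))%:E -> m <= q x + fine (h x).
  by move=> x Ex; apply: ge_inf; [exact: hasS.2 | exists x].
have : forall n : nat, exists x, h x = (fine (h x))%:E /\ q x + fine (h x) < m + harmonic n.
  move=> n; have [y [x [Ex ->]] Hy] := inf_adherent (harmonic_gt0 n) hasS.
  by exists x.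
move=> /choice [xs Hxs].
have half01 : 0 <= (1 / 2 : R) <= 1.
  by apply/andP; split; [rewrite divr_ge0 | rewrite ler_pdivrMr //; lra].
have cauchyB : forall n j, enorm (xs n - xs j) ^+ 2 <= 4 * gamma * (harmonic n + harmonic j).
  move=> n j; have [Ea Ha] := Hxs n; have [Eb Hb] := Hxs j.
  set a := xs n in Ea Ha *; set b := xs j in Eb Hb *.
  set mid := (1/2) *: a + (1 - 1/2) *: b.
  have hmid := hcv a b (1/2) half01; rewrite -/mid Ea Eb -!EFinM -EFinD in hmid.
  have Emid : h mid = (fine (h mid))%:E.
    by case: (fin_cases h mid hp) => // E; rewrite E leye_eq in hmid.
  have := mle mid Emid; rewrite Emid lee_fin in hmid.
  rewrite /q parallelogram.
  set ig := 1 / (2 * gamma).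
  have ig0 : 0 < ig by rewrite divr_gt0 // mulr_gt0.
  rewrite /q -/ig in Ha Hb.
  move=> Hm.
  have : ig * enorm (a - b) ^+ 2 < 2 * (harmonic n + harmonic j) by nra.
  move=> H.
  have -> : enorm (a - b) ^+ 2 = (2 * gamma) * (ig * enorm (a - b) ^+ 2).
    by rewrite /ig; field; rewrite gt_eqF.
  have : (2 * gamma) * (ig * enorm (a - b) ^+ 2) <= (2 * gamma) * (2 * (harmonic n + harmonic j)).
    by apply: ler_wpM2l; [rewrite mulr_ge0 // ltW | exact: ltW].
  lra.
have cv : cvg (xs n @[n --> \oo]).
  apply: cauchy_cvg; apply: cauchy_exP => e e0.
  have d0 : 0 < e ^+ 2 / (8 * gamma) by rewrite divr_gt0 ?exprn_gt0 ?mulr_gt0.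
  have /cvgrPdist_lt /(_ _ d0) [N _ HN] := @cvg_harmonic R.
  have HN' : forall n, (N <= n)%N -> harmonic n < e ^+ 2 / (8 * gamma).
    by move=> n /HN; rewrite /= sub0r normrN gtr0_norm ?harmonic_gt0.
  exists (xs N); exists N => // n /= Hn.
  rewrite -ball_normE /=.
  apply: le_lt_trans (mxnorm_le _) _.
  have := cauchyB N n; have := HN' N (leqnn N); have := HN' n Hn.
  have en0 := enorm_ge0 (xs N - xs n).
  set E := enorm _ => H1 H2 H3.
  have : E ^+ 2 < e ^+ 2.
    apply: le_lt_trans H3 _.
    have -> : e ^+ 2 = 4 * gamma * (e ^+ 2 / (8 * gamma) + e ^+ 2 / (8 * gamma)).
      by field; rewrite gt_eqF.
    by rewrite ltr_pM2l ?mulr_gt0 // ltrD.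
  by rewrite ltr_pXn2r // ?nnegrE ltW.
set xstar := lim (xs n @[n --> \oo]).
have Hq : q (xs n) @[n --> \oo] --> q xstar.
  have H : (fun n => enorm (v - xs n) * enorm (v - xs n)) @ \oo --> enorm (v - xstar) * enorm (v - xstar).
    by apply: cvgM; exact: enorm_cvg.
  have H2 : (fun n => 1 / (2 * gamma) * (enorm (v - xs n) * enorm (v - xs n))) @ \oo -->
     1 / (2 * gamma) * (enorm (v - xstar) * enorm (v - xstar)).
    by apply: cvgMr.
  exact: H2.
have Hcl : (h xstar <= (m + 0 - q xstar)%:E)%E.
  pose u := fun n => (xs n, m + harmonic n - q (xs n)).
  have Hnear : \forall n \near \oo, [set p : 'rV[R]_d * R | (h p.1 <= p.2%:E)%E] (u n).
    apply: nearW => n /=; have [E H] := Hxs n; rewrite E lee_fin; move: H; rewrite /harmonic /=; move=> H; rewrite lerBrDr addrC; exact: ltW.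
  have Hcv : u n @[n --> \oo] --> (xstar, m + 0 - q xstar).
    have Hr : (fun n => m + harmonic n - q (xs n)) @ \oo --> m + 0 - q xstar.
      by apply: cvgB => //; apply: cvgD => //; [exact: cvg_cst | exact: cvg_harmonic].
    exact: (cvg_pair cv Hr).
  exact: (@closed_cvg _ _ _ _ u _ hc Hnear _ Hcv).
exists xstar => x.
rewrite addr0 in Hcl.
apply: (@le_trans _ _ (m%:E)).
  apply: le_trans (leeD2l _ Hcl) _.
  by rewrite -EFinD lee_fin /q addrC subrK.
case: (fin_cases h x hp) => E; rewrite E; first by rewrite addey ?leey.
by rewrite -EFinD lee_fin; exact: mle x E.
Qed.

Lemma prox_spec (h : V -> \bar R) (gamma : R) (v : V) : 0 < gamma ->
  proper_fun h -> closed_fun h -> convex_fun h ->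
  is_prox gamma h v (prox gamma h v) /\
  h (prox gamma h v) = (fine (h (prox gamma h v)))%:E.
Proof.
move=> g0 hp hc hcv.
have P : is_prox gamma h v (prox gamma h v).
  by apply: xgetPex; exact: prox_exists.
split => //.
have [x0 [_ [_ [_ Ex0 _]]]] := lower_aff h hp hc hcv.
case: (fin_cases h (prox gamma h v) hp) => // E.
have := P x0; rewrite E Ex0 addey // leNgt => /negP; apply; exact: ltey.
Qed.

Lemma var_ineq (h : V -> \bar R) (gamma : R) (a p x : V) : 0 < gamma ->
  convex_fun h -> is_prox gamma h a p ->
  h p = (fine (h p))%:E -> h x = (fine (h x))%:E ->
  dotp (a - p) (x - p) <= gamma * (fine (h x) - fine (h p)).
Proof.
move=> g0 hcv P Ep Ex.
set D := dotp (a - p) (x - p); set N := enorm (x - p) ^+ 2.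
set hx := fine (h x); set hp := fine (h p).
set c := 1 / (2 * gamma).
have c0 : 0 < c by rewrite divr_gt0 // mulr_gt0.
have N0 : 0 <= N by rewrite sqr_ge0.
have key : forall t, 0 < t -> t <= 1 -> 2 * D <= t * N + 2 * gamma * (hx - hp).
  move=> t t0 t1.
  have := hcv x p t; rewrite ltW //= => /(_ t1); rewrite Ex Ep -!EFinM -EFinD => Hc.
  have := P (t *: x + (1 - t) *: p).
  move=> H; rewrite Ep in H; have := le_trans H (leeD2l _ Hc); rewrite -!EFinD lee_fin -/c.
  have -> : a - (t *: x + (1 - t) *: p) = (a - p) - t *: (x - p).
    by apply/rowP => i; rewrite !mxE; ring.
  rewrite (enorm_sqB (a - p)) dotpZr enormZ exprMn real_normK ?num_real // -/D -/N -/hx -/hp.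
  move=> H2.
  have H3 : 0 <= t * (c * (t * N - 2 * D) + (hx - hp)) by nra.
  rewrite pmulr_rge0 // in H3.
  have H4 : 0 <= 2 * gamma * (c * (t * N - 2 * D) + (hx - hp)) by rewrite mulr_ge0 // mulr_ge0 // ltW.
  have E2 : 2 * gamma * c = 1 by rewrite /c; field; rewrite gt_eqF.
  rewrite mulrDr mulrA E2 mul1r in H4; lra.
have : 2 * D <= 2 * (gamma * (hx - hp)).
  apply/ler_addgt0Pr => e e0.
  set t := e / (e + N + 1).
  have den0 : 0 < e + N + 1 by lra.
  have t0 : 0 < t by rewrite divr_gt0.
  have t1 : t <= 1 by rewrite ler_pdivrMr //; lra.
  have tN : t * N <= e.
    rewrite /t mulrAC ler_pdivrMr //; nra.
  have := key t t0 t1; lra.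
rewrite ler_pM2l //.
Qed.

Lemma prox_nonexp (h : V -> \bar R) (gamma : R) (a b : V) : 0 < gamma ->
  proper_fun h -> closed_fun h -> convex_fun h ->
  enorm (prox gamma h a - prox gamma h b) <= enorm (a - b).
Proof.
move=> g0 hp hc hcv.
have [Pa Ea] := prox_spec h gamma a g0 hp hc hcv.
have [Pb Eb] := prox_spec h gamma b g0 hp hc hcv.
set p := prox gamma h a in Pa Ea *; set q := prox gamma h b in Pb Eb *.
clearbody p q.
have H1 := var_ineq _ _ _ _ _ g0 hcv Pa Ea Eb.
have H2 := var_ineq _ _ _ _ _ g0 hcv Pb Eb Ea.
have E : dotp (a - p) (q - p) + dotp (b - q) (p - q) =
         - dotp (a - b) (p - q) + enorm (p - q) ^+ 2.
  rewrite enorm_sq /dotp -sumrN -!big_split /=; apply: eq_bigr => i _.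
  by rewrite !mxE; ring.
have H3 : enorm (p - q) ^+ 2 <= dotp (a - b) (p - q) by lra.
have H4 := le_trans H3 (CS (a - b) (p - q)).
have n0 := enorm_ge0 (p - q).
have [->|np] := eqVneq (enorm (p - q)) 0; first exact: enorm_ge0.
have npos : 0 < enorm (p - q) by rewrite lt_def np.
by rewrite expr2 ler_pM2r in H4.
Qed.

Lemma Pmap_mono (h : V -> \bar R) (gamma gb : R) (w s : V) : 0 < gamma -> gamma <= gb ->
  proper_fun h -> closed_fun h -> convex_fun h ->
  enorm (Pmap h gb w s) <= enorm (Pmap h gamma w s).
Proof.
move=> g0 ggb hp hc hcv.
have gb0 : 0 < gb by apply: lt_le_trans ggb.
have [Pa Ea] := prox_spec h gamma (w - gamma *: s) g0 hp hc hcv.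
have [Pb Eb] := prox_spec h gb (w - gb *: s) gb0 hp hc hcv.
rewrite /Pmap.
set p := prox gamma h _ in Pa Ea *; set q := prox gb h _ in Pb Eb *.
clearbody p q.
have H1 := var_ineq _ _ _ _ _ g0 hcv Pa Ea Eb.
have H2 := var_ineq _ _ _ _ _ gb0 hcv Pb Eb Ea.
set u1 := w - p; set u2 := w - q.
set A := dotp u1 u1; set B := dotp u1 u2; set C := dotp u2 u2.
set S1 := dotp s u1; set S2 := dotp s u2.
have E1 : dotp (w - gamma *: s - p) (q - p) = A - B - gamma * S1 + gamma * S2.
  rewrite /A /B /S1 /S2 /dotp !mulr_sumr -!sumrB -!big_split /=; apply: eq_bigr => i _.
  by rewrite /u1 /u2 !mxE; ring.
have E2 : dotp (w - gb *: s - q) (p - q) = C - B - gb * S2 + gb * S1.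
  rewrite /C /B /S1 /S2 /dotp !mulr_sumr -!sumrB -!big_split /=; apply: eq_bigr => i _.
  by rewrite /u1 /u2 !mxE; ring.
rewrite E1 in H1; rewrite E2 in H2.
set hP := fine (h p) in H1 H2; set hQ := fine (h q) in H1 H2.
have H1' : gb * (A - B - gamma * S1 + gamma * S2) <= gb * (gamma * (hQ - hP)).
  by rewrite ler_wpM2l // ltW.
have H2' : gamma * (C - B - gb * S2 + gb * S1) <= gamma * (gb * (hP - hQ)).
  by rewrite ler_wpM2l // ltW.
have H3 : gb * (A - B) + gamma * (C - B) <= 0 by lra.
have CSB := CS u1 u2; rewrite -/B in CSB.
have EA : A = enorm u1 ^+ 2 by rewrite enorm_sq.
have EC : C = enorm u2 ^+ 2 by rewrite enorm_sq.
set X := enorm u1 in EA CSB; set Y := enorm u2 in EC CSB.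
have X0 : 0 <= X by exact: enorm_ge0.
have Y0 : 0 <= Y by exact: enorm_ge0.
have H4 : gb * X ^+ 2 + gamma * Y ^+ 2 <= (gamma + gb) * (X * Y).
  have : (gamma + gb) * B <= (gamma + gb) * (X * Y) by rewrite ler_wpM2l // addr_ge0 // ltW.
  rewrite -EA -EC; lra.
rewrite !enormZ -/X -/Y !gtr0_norm ?invr_gt0 //.
rewrite -subr_ge0.
have -> : gamma^-1 * X - gb^-1 * Y = (gb * X - gamma * Y) / (gamma * gb).
  by field; apply/andP; split; rewrite gt_eqF.
apply: divr_ge0; last by rewrite mulr_ge0 // ltW.
rewrite subr_ge0 leNgt; apply/negP => Hlt.
have HYX : X < Y.
  have : gamma * X < gamma * Y.
    apply: le_lt_trans Hlt; apply: ler_wpM2r => //.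
  by rewrite ltr_pM2l.
have P1 : 0 < (gamma * Y - gb * X) * (Y - X) by rewrite mulr_gt0 // subr_gt0.
have : (gamma * Y - gb * X) * (Y - X) = gamma * Y ^+ 2 + gb * X ^+ 2 - (gamma + gb) * (X * Y) by ring.
lra.
Qed.

Lemma Pmap_lip (h : V -> \bar R) (gamma : R) (w z s s' : V) : 0 < gamma ->
  proper_fun h -> closed_fun h -> convex_fun h ->
  enorm (Pmap h gamma z s' - Pmap h gamma w s) <=
  gamma^-1 * (2 * enorm (z - w)) + enorm (s' - s).
Proof.
move=> g0 hp hc hcv.
have NE := prox_nonexp h gamma (z - gamma *: s') (w - gamma *: s) g0 hp hc hcv.
rewrite /Pmap.
set P1 := prox gamma h (z - gamma *: s') in NE *.
set P2 := prox gamma h (w - gamma *: s) in NE *.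
clearbody P1 P2.
rewrite -scalerBr enormZ gtr0_norm ?invr_gt0 //.
have -> : z - P1 - (w - P2) = (z - w) - (P1 - P2) by apply/rowP => i; rewrite !mxE; ring.
have E : z - gamma *: s' - (w - gamma *: s) = (z - w) - gamma *: (s' - s).
  by apply/rowP => i; rewrite !mxE; ring.
rewrite E in NE.
have H1 := enormB (z - w) (P1 - P2).
have H2 := enormB (z - w) (gamma *: (s' - s)); rewrite enormZ gtr0_norm // in H2.
have H3 : enorm (z - w - (P1 - P2)) <= 2 * enorm (z - w) + gamma * enorm (s' - s) by lra.
have -> : gamma^-1 * (2 * enorm (z - w)) + enorm (s' - s) =
  gamma^-1 * (2 * enorm (z - w) + gamma * enorm (s' - s)).
  by field; rewrite gt_eqF.
by rewrite ler_wpM2l // invr_ge0 ltW.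
Qed.
End Prox.



Theorem mainTheorem3 (R : realType) (d : nat)
  (f : 'rV[R]_d -> R) (h : 'rV[R]_d -> \bar R) (g : 'rV[R]_d -> R)
  (L l lambda : R) (zeta : 'rV[R]_d -> 'rV[R]_d)
  (w : 'rV[R]_d) (gamma gammabar : R) :
  0 <= L -> 0 <= l ->
  L_smooth L f ->
  proper_fun h -> closed_fun h -> convex_fun h ->
  lipschitz_fun l g ->
  0 < lambda ->
  (forall (v x : 'rV[R]_d),
     1 / (2 * lambda) * enorm (v - zeta v) ^+ 2 + g (zeta v) <=
     1 / (2 * lambda) * enorm (v - x) ^+ 2 + g x) ->
  0 < gamma -> gamma <= gammabar ->
  (dist0 (Gset f h g gammabar (zeta w)) <=
   (enorm (Pmap h gamma w (grad f w + lambda^-1 *: (w - zeta w)))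
    + 2 * l * lambda * (2 / gammabar + L))%:E)%E.
Proof.
move=> L0 l0 [_ Hgrad] hp hc hcv Hlip lam0 Hzeta g0 ggb.
have gb0 : 0 < gammabar by apply: lt_le_trans ggb.
set z := zeta w.
set v := lambda^-1 *: (w - z).
set E := enorm (w - z).
have E0 : 0 <= E by exact: enorm_ge0.
have c0 : 0 < 1 / (2 * lambda) by rewrite divr_gt0 // mulr_gt0.
have Ewz : E <= 2 * l * lambda.
  have := Hzeta w w; rewrite -/z subrr enorm0 expr0n /= mulr0 add0r.
  have := Hlip w z; rewrite -/E => /ler_normlP [_ H1] H2.
  have H3 : 1 / (2 * lambda) * E ^+ 2 <= l * E by lra.
  have H4 : E ^+ 2 <= (2 * l * lambda) * E.
    have -> : E ^+ 2 = (2 * lambda) * (1 / (2 * lambda) * E ^+ 2) by field; rewrite gt_eqF.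
    have -> : 2 * l * lambda * E = (2 * lambda) * (l * E) by ring.
    by rewrite ler_wpM2l // mulr_ge0 // ltW.
  have [->|En] := eqVneq E 0; first by rewrite !mulr_ge0 // ltW.
  have Ep : 0 < E by rewrite lt_def En.
  by rewrite expr2 ler_pM2r in H4.
have Hsub : limiting_subdiff g z v.
  exists (fun=> z), (fun=> v); split; [exact: cvg_cst|exact: cvg_cst|exact: cvg_cst|].
  move=> _ eps eps0.
  set sd := Num.sqrt (d%:R : R).
  have sd0 : 0 <= sd by exact: sqrtr_ge0.
  have del0 : 0 < 2 * lambda * eps / (sd + 1) by rewrite divr_gt0 ?mulr_gt0 // ltr_wpDl.
  apply/nbhs_ballP; exists (2 * lambda * eps / (sd + 1)) => // y.
  rewrite -ball_normE /= => Hy.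
  set r := enorm (y - z).
  have r0 : 0 <= r by exact: enorm_ge0.
  have Hr : r <= 2 * lambda * eps.
    apply: le_trans (enorm_le_mx _) _.
    rewrite distrC in Hy.
    apply: (@le_trans _ _ ((sd + 1) * `|y - z|)); first by rewrite ler_wpM2r // lerDl.
    by rewrite mulrC -ler_pdivlMr ?ltr_wpDl // ltW.
  have := Hzeta w y; rewrite -/z.
  have -> : w - y = (w - z) - (y - z) by apply/rowP => i; rewrite !mxE; ring.
  rewrite (enorm_sqB (w - z)) -/E -/r.
  rewrite /v dotpZl.
  set D := dotp (w - z) (y - z).
  move=> H.
  have H1 : g y - g z - lambda^-1 * D >= - (1 / (2 * lambda) * r ^+ 2).
    have -> : lambda^-1 * D = 1 / (2 * lambda) * (2 * D) by field; rewrite gt_eqF.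
    lra.
  apply: le_trans H1.
  have Hq : 1 / (2 * lambda) * r <= eps.
    have : 1 / (2 * lambda) * r <= 1 / (2 * lambda) * (2 * lambda * eps) by rewrite ler_wpM2l // ltW.
    have -> : 1 / (2 * lambda) * (2 * lambda * eps) = eps by field; rewrite gt_eqF.
    by [].
  have : 1 / (2 * lambda) * r ^+ 2 <= eps * r.
    by rewrite expr2 mulrA ler_wpM2r.
  lra.
set s := grad f w + v.
set s' := grad f z + v.
have Hd : (dist0 (Gset f h g gammabar z) <= (enorm (Pmap h gammabar z s'))%:E)%E.
  apply: ereal_inf_lbound; exists (Pmap h gammabar z s') => //.
  by exists v.
apply: le_trans Hd _; rewrite lee_fin.
have T1 := enorm_tri (Pmap h gammabar w s) (Pmap h gammabar z s').
have T2 := Pmap_lip h gammabar w z s s' gb0 hp hc hcv.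
have T3 := Pmap_mono h gamma gammabar w s g0 ggb hp hc hcv.
have T4 : enorm (s' - s) <= L * E.
  rewrite /s /s' subDD_r /E (enorm_sym w z).
  exact: Hgrad.
have T5 : enorm (z - w) = E by rewrite /E enorm_sym.
rewrite T5 in T2.
have T6 : gammabar^-1 * (2 * E) + L * E <= 2 * l * lambda * (2 / gammabar + L).
  have -> : gammabar^-1 * (2 * E) + L * E = (2 / gammabar + L) * E by field; rewrite gt_eqF.
  rewrite [leRHS]mulrC; apply: ler_wpM2l => //.
  by rewrite addr_ge0 // divr_ge0 // ltW.
move: T1 T2 T3.
move: (Pmap h gammabar w s) (Pmap h gammabar z s') (Pmap h gamma w s) => P1 P2 P3 T1 T2 T3.
lra.
Qed.
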